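(* Consider the uncontrolled network SIS system $\dot x=(-D+B-XB)x$ and the controlled system $\dot x=(-D-H(x)+B-XB)x$, with $B$ irreducible and $s(-D+B)>0$, where $H(x)=\operatorname{diag}(h_1(x_1),\dots,h_n(x_n))$, each $h_i:[0,1]\to\mathbb{R}_{\ge0}$ is bounded, smooth, monotonically nondecreasing with $h_i(0)=0$, and there exists an index $j$ such that $h_j(s)>0$ for all $s\in(0,1]$. Let $x^*$ and $\bar x^*$ denote the unique endemic equilibria (in $\Xi_n\setminus\{0_n\}$) of the uncontrolled and controlled systems, respectively. Then $\bar x^*<x^*$ entrywise, i.e. $\bar x^*_i<x^*_i$ for every $i=1,\dots,n$.
   Context: $n\ge2$, $D=\operatorname{diag}(d_1,\dots,d_n)$ with $d_i>0$, $B=(b_{ij})\in\mathbb{R}^{n\times n}$ entrywise nonnegative and irreducible (equivalently, its directed graph is strongly connected), $X=\operatorname{diag}(x_1,\dots,x_n)$. $\Xi_n=[0,1]^n$. $s(M)$ denotes the largest real part of the eigenvalues of a square matrix $M$. (Under these hypotheses each system has exactly one equilibrium in $\Xi_n\setminus\{0_n\}$, lying in the interior of $\Xi_n$.) *)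

(* Defs.v *)
From Stdlib Require Import Reals Relations.
Open Scope R_scope.

(* Vectors in R^n are functions nat -> R (only indices < n matter);
   n x n matrices are functions nat -> nat -> R. *)

Fixpoint rsum (n : nat) (f : nat -> R) : R :=
  match n with
  | O => 0
  | S k => rsum k f + f k
  end.

Definition mvmul (n : nat) (M : nat -> nat -> R) (x : nat -> R) (i : nat) : R :=
  rsum n (fun j => M i j * x j).

Definition mDpB (d : nat -> R) (B : nat -> nat -> R) : nat -> nat -> R :=
  fun i j => (if Nat.eq_dec i j then - d i else 0) + B i j.

(* a + i b (a, b real) is an eigenvalue of the real matrix M:
   there is a nonzero complex vector u + i v with M (u + i v) = (a + i b)(u + i v). *)
Definition is_eigenvalue (n : nat) (M : nat -> nat -> R) (a b : R) : Prop :=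
  exists u v : nat -> R,
    (exists i, (i < n)%nat /\ (u i <> 0 \/ v i <> 0)) /\
    (forall i, (i < n)%nat ->
       mvmul n M u i = a * u i - b * v i /\
       mvmul n M v i = b * u i + a * v i).

(* s(M) > 0, where s(M) = max real part of the (finitely many) eigenvalues *)
Definition spectral_abscissa_pos (n : nat) (M : nat -> nat -> R) : Prop :=
  exists a b, is_eigenvalue n M a b /\ 0 < a.

Definition graph_edge (n : nat) (B : nat -> nat -> R) (i j : nat) : Prop :=
  (i < n)%nat /\ (j < n)%nat /\ B j i <> 0.

(* B irreducible <-> its directed graph is strongly connected *)
Definition irreducible (n : nat) (B : nat -> nat -> R) : Prop :=
  forall i j, (i < n)%nat -> (j < n)%nat ->
    clos_refl_trans nat (graph_edge n B) i j.

Definition in_Xi (n : nat) (x : nat -> R) : Prop :=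
  forall i, (i < n)%nat -> 0 <= x i <= 1.

Definition nonzero_vec (n : nat) (x : nat -> R) : Prop :=
  exists i, (i < n)%nat /\ x i <> 0.

Definition smooth_R (g : R -> R) : Prop :=
  exists dg : nat -> R -> R,
    dg O = g /\ forall k x, derivable_pt_lim (dg k) x (dg (S k) x).

(* h is smooth on [0,1]: restriction of a C^infinity function on R *)
Definition smooth_on_01 (h : R -> R) : Prop :=
  exists g, smooth_R g /\ forall s, 0 <= s <= 1 -> g s = h s.

Definition admissible_control (h : R -> R) : Prop :=
  (exists K, forall s, 0 <= s <= 1 -> Rabs (h s) <= K) /\
  smooth_on_01 h /\
  (forall s t, 0 <= s -> s <= t -> t <= 1 -> h s <= h t) /\
  (forall s, 0 <= s <= 1 -> 0 <= h s) /\
  h 0 = 0.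

Definition is_equilibrium (n : nat) (d : nat -> R) (B : nat -> nat -> R)
    (x : nat -> R) : Prop :=
  forall i, (i < n)%nat ->
    - d i * x i + mvmul n B x i - x i * mvmul n B x i = 0.

Definition is_equilibrium_ctrl (n : nat) (d : nat -> R) (h : nat -> R -> R)
    (B : nat -> nat -> R) (x : nat -> R) : Prop :=
  forall i, (i < n)%nat ->
    - d i * x i - h i (x i) * x i + mvmul n B x i - x i * mvmul n B x i = 0.

(* Main.v *)
Require Import Defs.
From Stdlib Require Import Reals Lra Lia Psatz Relations.
Open Scope R_scope.

Lemma rsum_le n f g : (forall j, (j < n)%nat -> f j <= g j) -> rsum n f <= rsum n g.
Proof. induction n; simpl; intros H; [lra|]. assert (H1 := H n ltac:(lia)).
  assert (rsum n f <= rsum n g) by (apply IHn; intros; apply H; lia). lra. Qed.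

Lemma rsum_minus n f g : rsum n f - rsum n g = rsum n (fun j => f j - g j).
Proof. induction n; simpl; [lra|]. rewrite <- IHn. lra. Qed.

Lemma rsum_nonneg n f : (forall j, (j < n)%nat -> 0 <= f j) -> 0 <= rsum n f.
Proof. induction n; simpl; intros H; [lra|]. assert (H1 := H n ltac:(lia)).
  assert (0 <= rsum n f) by (apply IHn; intros; apply H; lia). lra. Qed.

Lemma rsum_zero n f : (forall j, (j < n)%nat -> 0 <= f j) -> rsum n f = 0 ->
  forall j, (j < n)%nat -> f j = 0.
Proof. induction n; simpl; intros H E j Hj; [lia|].
  assert (H1 := H n ltac:(lia)).
  assert (0 <= rsum n f) by (apply rsum_nonneg; intros; apply H; lia).
  destruct (Nat.eq_dec j n) as [->|]; [lra|].
  apply IHn; try lra; try lia. intros; apply H; lia. Qed.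

Lemma rsum_scal n t f : rsum n (fun j => t * f j) = t * rsum n f.
Proof. induction n; simpl; [lra|]. rewrite IHn. lra. Qed.

Lemma argmax n (f : nat -> R) : (1 <= n)%nat ->
  exists k, (k < n)%nat /\ forall j, (j < n)%nat -> f j <= f k.
Proof. induction n; intros Hn; [lia|]. destruct n.
  - exists 0%nat; split; [lia|]. intros j Hj; replace j with 0%nat by lia; lra.
  - destruct (IHn ltac:(lia)) as [k [Hk Hm]].
    destruct (Rle_dec (f (S n)) (f k)).
    + exists k; split; [lia|]. intros j Hj. destruct (Nat.eq_dec j (S n)) as [->|]; auto.
      apply Hm; lia.
    + exists (S n); split; [lia|]. intros j Hj. destruct (Nat.eq_dec j (S n)) as [->|]; [lra|].
      assert (f j <= f k) by (apply Hm; lia). lra. Qed.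

Lemma propagate n B (P : nat -> Prop) :
  irreducible n B ->
  (forall i j, (i < n)%nat -> (j < n)%nat -> B i j <> 0 -> P i -> P j) ->
  forall i0, (i0 < n)%nat -> P i0 -> forall j, (j < n)%nat -> P j.
Proof. intros Hirr Hs i0 Hi0 P0 j Hj.
  assert (C := Hirr j i0 Hj Hi0).
  assert (forall a b, clos_refl_trans nat (graph_edge n B) a b -> P b -> P a).
  { intros a b Hab; induction Hab; auto.
    destruct H as [Hx [Hy Hb]]. intros; eapply Hs; eauto. }
  eauto. Qed.

Lemma positive n d B x (g : nat -> R) : irreducible n B ->
  (forall i, (i < n)%nat -> 0 <= d i) ->
  (forall i j, (i < n)%nat -> (j < n)%nat -> 0 <= B i j) ->
  in_Xi n x -> nonzero_vec n x ->
  (forall i, (i < n)%nat -> x i = 0 -> mvmul n B x i = 0) ->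
  forall i, (i < n)%nat -> 0 < x i.
Proof. intros Hirr Hd HB HX [i0 [Hi0 Hnz]] Heq i Hi.
  destruct (HX i Hi) as [H0 _]. destruct H0 as [|H0]; auto. exfalso.
  apply Hnz. symmetry in H0.
  apply (propagate n B (fun j => x j = 0) Hirr) with i; auto.
  intros a b Ha Hb Hab Pa.
  assert (E := Heq a Ha Pa). unfold mvmul in E.
  assert (Z := rsum_zero n (fun j => B a j * x j)
     ltac:(intros j Hj; apply Rmult_le_pos; [apply HB; auto| apply HX; auto]) E b Hb).
  simpl in Z. apply Rmult_integral in Z. destruct Z; [contradiction|auto]. Qed.

Theorem lemma5 (n : nat) (d : nat -> R) (B : nat -> nat -> R)
    (h : nat -> R -> R) (xs xbs : nat -> R) :
  (2 <= n)%nat ->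
  (forall i, (i < n)%nat -> 0 < d i) ->
  (forall i j, (i < n)%nat -> (j < n)%nat -> 0 <= B i j) ->
  irreducible n B ->
  spectral_abscissa_pos n (mDpB d B) ->
  (forall i, (i < n)%nat -> admissible_control (h i)) ->
  (exists j, (j < n)%nat /\ forall s, 0 < s <= 1 -> 0 < h j s) ->
  in_Xi n xs -> nonzero_vec n xs -> is_equilibrium n d B xs ->
  in_Xi n xbs -> nonzero_vec n xbs -> is_equilibrium_ctrl n d h B xbs ->
  forall i, (i < n)%nat -> xbs i < xs i.
Proof.
  intros Hn Hd HB Hirr _ Hadm [j0 [Hj0 Hhj]] HXx Hnx Ex HXy Hny Ey.
  assert (Hd' : forall i, (i < n)%nat -> 0 <= d i) by (intros; left; auto).
  assert (Px : forall i, (i < n)%nat -> 0 < xs i).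
  { apply (positive n d B xs xs Hirr Hd' HB HXx Hnx).
    intros i Hi E. assert (H := Ex i Hi). rewrite E in H. lra. }
  assert (Py : forall i, (i < n)%nat -> 0 < xbs i).
  { apply (positive n d B xbs xbs Hirr Hd' HB HXy Hny).
    intros i Hi E. assert (H := Ey i Hi). rewrite E in H. lra. }
  assert (Hh0 : forall i, (i < n)%nat -> 0 <= h i (xbs i)).
  { intros i Hi. destruct (Hadm i Hi) as [_ [_ [_ [H _]]]]. apply H, HXy, Hi. }
  assert (Hle : forall i, (i < n)%nat -> xbs i <= xs i).
  { destruct (argmax n (fun j => xbs j / xs j) ltac:(lia)) as [k [Hk Hm]].
    set (t := xbs k / xs k) in *.
    assert (Hyt : forall j, (j < n)%nat -> xbs j <= t * xs j).
    { intros j Hj. assert (Hq := Hm j Hj). simpl in Hq.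
      assert (Pj := Px j Hj).
      replace (xbs j) with ((xbs j / xs j) * xs j) by (field; lra).
      apply Rmult_le_compat_r; lra. }
    assert (Ht : t <= 1).
    { destruct (Rle_dec t 1) as [|Hgt]; auto. exfalso.
      assert (Pk := Px k Hk). assert (Hyk : xbs k = t * xs k) by (unfold t; field; lra).
      assert (HBy : mvmul n B xbs k <= t * mvmul n B xs k).
      { unfold mvmul. rewrite <- rsum_scal. apply rsum_le. intros j Hj.
        assert (H1 := Hyt j Hj). assert (H2 := HB k j Hk Hj).
        replace (t * (B k j * xs j)) with (B k j * (t * xs j)) by ring.
        apply Rmult_le_compat_l; auto. }
      assert (E1 := Ex k Hk). assert (E2 := Ey k Hk).
      assert (dk := Hd k Hk). assert (hk := Hh0 k Hk).
      destruct (HXy k Hk) as [_ yk1]. destruct (HXx k Hk) as [_ xk1].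
      set (bx := mvmul n B xs k) in *. set (by_ := mvmul n B xbs k) in *.
      set (hh := h k (xbs k)) in *.
      assert (bxp : 0 < bx).
      { assert (xs k < 1).
        { destruct xk1; auto. rewrite H in E1. lra. }
        assert (0 < xs k * d k) by (apply Rmult_lt_0_compat; lra). nra. }
      rewrite Hyk in E2, yk1.
      (* t xk d + t xk h = (1 - t xk) by <= (1 - t xk) t bx ; t xk d = t (1-xk) bx *)
      assert (A1 : (1 - t * xs k) * by_ <= (1 - t * xs k) * (t * bx))
        by (apply Rmult_le_compat_l; lra).
      assert (A2 : 0 <= t * xs k * hh) by (apply Rmult_le_pos; nra).
      assert (A3 : 0 < t * bx * (t - 1) * xs k).
      { apply Rmult_lt_0_compat; [|lra]. apply Rmult_lt_0_compat; [|lra].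
        apply Rmult_lt_0_compat; lra. }
      nra. }
    intros i Hi. assert (H := Hyt i Hi). assert (Pi := Px i Hi). nra. }
  assert (Heqs : forall k, (k < n)%nat -> xbs k = xs k ->
     h k (xbs k) = 0 /\ forall j, (j < n)%nat -> B k j <> 0 -> xbs j = xs j).
  { intros k Hk Eq.
    assert (E1 := Ex k Hk). assert (E2 := Ey k Hk).
    assert (hk := Hh0 k Hk). assert (Pk := Px k Hk).
    assert (HD : 0 <= mvmul n B xs k - mvmul n B xbs k).
    { unfold mvmul. rewrite rsum_minus. apply rsum_nonneg. intros j Hj.
      assert (H1 := Hle j Hj). assert (H2 := HB k j Hk Hj). nra. }
    destruct (HXx k Hk) as [_ xk1].
    assert (xk1' : xs k < 1) by (destruct xk1; auto; rewrite H in E1; assert (H3 := Hd k Hk); lra).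
    rewrite Eq in E2.
    assert (Q : xs k * h k (xs k) = (1 - xs k) * (mvmul n B xbs k - mvmul n B xs k)) by lra.
    assert (Q2 : (1 - xs k) * (mvmul n B xs k - mvmul n B xbs k) >= 0)
      by (apply Rle_ge, Rmult_le_pos; lra).
    assert (Q3 : 0 <= xs k * h k (xs k)) by (rewrite <- Eq; apply Rmult_le_pos; lra).
    assert (Q4 : xs k * h k (xs k) = 0) by lra.
    split.
    - rewrite Eq. apply Rmult_integral in Q4. destruct Q4; [lra|auto].
    - assert (Z : mvmul n B xs k - mvmul n B xbs k = 0).
      { assert (Q5 : (1 - xs k) * (mvmul n B xs k - mvmul n B xbs k) = 0) by lra.
        apply Rmult_integral in Q5. destruct Q5; [lra|auto]. }
      unfold mvmul in Z. rewrite rsum_minus in Z.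
      intros j Hj Hb.
      assert (W := rsum_zero n (fun j0 => B k j0 * xs j0 - B k j0 * xbs j0) ltac:(intros j' Hj'; assert (H1 := Hle j' Hj');
            assert (H2 := HB k j' Hk Hj'); nra) Z j Hj). simpl in W.
      assert (W' : B k j * (xs j - xbs j) = 0) by lra.
      apply Rmult_integral in W'. destruct W'; [contradiction|lra]. }
  intros i Hi. destruct (Hle i Hi) as [|Eqi]; auto. exfalso.
  assert (All : forall j, (j < n)%nat -> xbs j = xs j).
  { apply (propagate n B (fun j => xbs j = xs j) Hirr) with i; auto.
    intros a b Ha Hb Hab Pa. apply (proj2 (Heqs a Ha Pa)); auto. }
  destruct (Heqs j0 Hj0 (All j0 Hj0)) as [Hz _].
  assert (Pj := Py j0 Hj0). destruct (HXy j0 Hj0).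
  assert (0 < h j0 (xbs j0)) by (apply Hhj; lra). lra.
Qed.
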